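(* Let $F$ be a rooted forest-tuple and $m\in\mathbb{N}$. If $a(F)<m/3$ and $m\ge e(F)$, then $F$ is $m$-suitable.
   Context: A rooted forest is a forest each of whose components contains exactly one designated root. A rooted forest-tuple is a tuple $F=(F_1,\ldots,F_\ell)$ of pairwise vertex-disjoint rooted forests with $e(F_i)>0$ for some $i$; $e(F)=\sum_i e(F_i)$. Define $a(F)=\max_i e(F_i)$, $k(F)=|\{i: e(F_i)=a(F)\}|$, $t(F)=|\{i: e(F_i)>0\}|$. $F$ is suitable if $3a(F)+k(F)-e(F)\le 2$, or if $a(F)=1$ and $t(F)\ge 4$. A rooted forest-tuple $F=(F_1,\dots,F_\ell)$ is a valid subforest of a rooted forest-tuple $G=(G_1,\dots,G_{\ell''})$ if $\ell\le\ell''$, $F_i\subseteq G_i$ for every $i\in[\ell]$, and every root of $F_i$ is a root of $G_i$. $F$ is $m$-suitable if it is a valid subforest of some suitable rooted forest-tuple $G$ with $e(G)=m$. *)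

(* Defs.v *)
(* Vertices are natural numbers (an unbounded supply,
   so that a forest-tuple G extending F may use fresh vertices). *)
From mathcomp Require Import all_boot.
Set Implicit Arguments. Unset Strict Implicit. Unset Printing Implicit Defensive.

(* A rooted forest: vertex list, edge list (each unordered edge {u,v} stored once
   as the pair (u,v) with u < v), and list of designated roots. *)
Record rforest := RForest { rf_V : seq nat; rf_E : seq (nat * nat); rf_R : seq nat }.

Definition adj (F : rforest) : rel nat :=
  fun u v => ((u, v) \in rf_E F) || ((v, u) \in rf_E F).

Definition connected_in (F : rforest) (u v : nat) : Prop :=
  exists p : seq nat, path (adj F) u p /\ last u p = v.

Definition nedges (F : rforest) : nat := size (rf_E F).

Definition is_rforest (F : rforest) : Prop :=
  uniq (rf_E F) /\ [/\
      (forall u v, (u, v) \in rf_E F -> [/\ u \in rf_V F, v \in rf_V F & u < v]),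
      (forall c : seq nat, uniq c -> 3 <= size c -> ~~ cycle (adj F) c),
      {subset rf_R F <= rf_V F},
      (forall v, v \in rf_V F -> exists2 r, r \in rf_R F & connected_in F v r) &
      (forall r1 r2, r1 \in rf_R F -> r2 \in rf_R F -> connected_in F r1 r2 -> r1 = r2)].

Definition is_rftuple (F : seq rforest) : Prop :=
  [/\ (forall i, i < size F -> is_rforest (nth (RForest [::] [::] [::]) F i)),
      (forall i j x, i < size F -> j < size F -> i != j ->
         x \in rf_V (nth (RForest [::] [::] [::]) F i) ->
         x \notin rf_V (nth (RForest [::] [::] [::]) F j)) &
      has (fun G => 0 < nedges G) F].

Definition tup_e (F : seq rforest) : nat := sumn (map nedges F).
Definition tup_a (F : seq rforest) : nat := \max_(G <- F) nedges G.
Definition tup_k (F : seq rforest) : nat := count (fun G => nedges G == tup_a F) F.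
Definition tup_t (F : seq rforest) : nat := count (fun G => 0 < nedges G) F.

(* suitable: 3a + k - e <= 2 (over the integers), or (a = 1 and t >= 4) *)
Definition suitable (F : seq rforest) : Prop :=
  3 * tup_a F + tup_k F <= tup_e F + 2 \/ (tup_a F = 1 /\ 4 <= tup_t F).

Definition subforest (F G : rforest) : Prop :=
  {subset rf_V F <= rf_V G} /\ {subset rf_E F <= rf_E G}.

Definition valid_subforest (F G : seq rforest) : Prop :=
  size F <= size G /\
  forall i, i < size F ->
    let Fi := nth (RForest [::] [::] [::]) F i in
    let Gi := nth (RForest [::] [::] [::]) G i in
    subforest Fi Gi /\ {subset rf_R Fi <= rf_R Gi}.

Definition m_suitable (m : nat) (F : seq rforest) : Prop :=
  exists G : seq rforest,
    [/\ is_rftuple G, suitable G, tup_e G = m & valid_subforest F G].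

(* Main.v *)
Require Import Defs.
From mathcomp Require Import all_boot.
From mathcomp Require Import zify.

Definition single (u : nat) := RForest [:: u; u.+1] [:: (u, u.+1)] [:: u].

Lemma single_ok u : is_rforest (single u).
Proof.
split=> //; split.
- by move=> x y; rewrite inE => /eqP [-> ->]; rewrite !inE !eqxx /= ?orbT ltnSn.
- move=> c uc sc; apply/negP => cyc.
  have sub : {subset c <= [:: u; u.+1]}.
    move=> x xc; have := next_cycle cyc xc.
    rewrite /adj /= !inE => /orP [] /eqP [] h1 h2; [by rewrite h1 eqxx | by rewrite h2 eqxx orbT].
  by have := uniq_leq_size uc sub; rewrite /=; lia.
- by move=> x; rewrite !inE => /eqP ->; rewrite eqxx.
- move=> v; rewrite !inE => /orP [] /eqP ->; exists u; rewrite ?inE //.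
  + by exists [::].
  + by exists [:: u]; rewrite /= /adj /= !inE eqxx orbT.
- by move=> r1 r2; rewrite !inE => /eqP -> /eqP ->.
Qed.

Definition vb (F : seq rforest) := sumn (map (fun G => sumn (rf_V G)) F).

Lemma mem_sumn x s : x \in s -> x <= sumn s.
Proof.
elim: s => //= y s IH; rewrite inE => /orP [/eqP -> | /IH]; lia.
Qed.

Lemma vb_bound F i x : i < size F ->
  x \in rf_V (nth (RForest [::] [::] [::]) F i) -> x < vb F + 1.
Proof.
elim: F i => //= G F IH [|i] /=.
- by move=> _ /mem_sumn; rewrite /vb /=; lia.
- by move=> hi /(IH _ hi); rewrite /vb /=; lia.
Qed.

Lemma tup_a_cons G F : tup_a (G :: F) = maxn (nedges G) (tup_a F).
Proof. by rewrite /tup_a big_cons. Qed.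

Lemma has_a_pos F : has (fun G => 0 < nedges G) F -> 0 < tup_a F.
Proof.
elim: F => //= G F IH; rewrite tup_a_cons => /orP [h | /IH h]; lia.
Qed.

Lemma le_a (F : seq rforest) : all (fun G => nedges G <= tup_a F) F.
Proof.
elim: F => //= H F IH; rewrite tup_a_cons; apply/andP; split; first lia.
by apply: sub_all IH => G /=; lia.
Qed.

Lemma k_bound F a : count (fun G => nedges G == a) F * a <= tup_e F.
Proof.
elim: F => //= G F IH; rewrite /tup_e /= -/(tup_e F).
case: eqP => /= [->|_]; lia.
Qed.

Lemma e_eq_t F : all (fun G => nedges G <= 1) F -> tup_e F = tup_t F.
Proof.
elim: F => //= G F IH /andP [H1 H]; rewrite /tup_e /tup_t /= -/(tup_e F) -/(tup_t F).
rewrite IH //; move: H1; case: (nedges G) => [|[|]] //=.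
Qed.

Theorem lemma3p9 (F : seq rforest) (m : nat) :
  is_rftuple F -> 3 * tup_a F < m -> tup_e F <= m -> m_suitable m F.
Proof.
move=> [Hf Hd Hh] Ha He.
set N := vb F + 1.
set d := m - tup_e F.
set S := mkseq (fun j => single (N + 2 * j)) d.
have nthS j : j < d -> nth (RForest [::] [::] [::]) S j = single (N + 2 * j).
  by move=> hj; rewrite nth_mkseq.
have szS : size S = d by rewrite size_mkseq.
have nS : map nedges S = nseq d 1.
  by rewrite /S /mkseq -map_comp; apply: (@eq_from_nth _ 0);
    rewrite ?size_map ?size_iota ?size_nseq // => i hi;
    rewrite (nth_map 0) ?size_iota // nth_nseq hi.
have eS : tup_e S = d by rewrite /tup_e nS sumn_nseq mul1n.
have memS : all (fun G => nedges G == 1) S.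
  by rewrite /S /mkseq all_map; apply/allP => j _.
have a1 : 0 < tup_a F := has_a_pos _ Hh.
have aG : tup_a (F ++ S) = tup_a F.
  rewrite /tup_a big_cat /= -/(tup_a F).
  have : \max_(G <- S) nedges G <= 1.
    clear -memS; elim: S memS => [|x s IH] /=; first by rewrite big_nil.
    move=> /andP [/eqP H1 H]; rewrite big_cons; have := IH H; lia.
  lia.
exists (F ++ S); split.
- split.
  + move=> i; rewrite size_cat nth_cat; case: (ltnP i (size F)) => hi hi2; first exact: Hf.
    rewrite nthS; [exact: single_ok | lia].
  + move=> i j x; rewrite size_cat !nth_cat => hi hj hij.
    case: (ltnP i (size F)) => hi'; case: (ltnP j (size F)) => hj'.
    * exact: Hd.
    * rewrite nthS; last lia.
      move=> /(vb_bound _ _ _ hi') hx; rewrite !inE; apply/negP => /orP [] /eqP hy; rewrite /N in hx; lia.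
    * rewrite nthS; last lia.
      rewrite !inE => hx; apply/negP => hy; have := vb_bound _ _ _ hj' hy.
      by move: hx => /orP [] /eqP hz; rewrite /N in hz; lia.
    * rewrite !nthS; try lia.
      by rewrite !inE => /orP [] /eqP -> ; apply/negP => /orP [] /eqP hz; lia.
  + by rewrite has_cat Hh.
- rewrite /suitable aG.
  case: (leqP (tup_a F) 1) => ha.
  + right; split; first lia.
    rewrite /tup_t count_cat -/(tup_t F) -e_eq_t.
    * have -> : count (fun G => 0 < nedges G) S = d.
        rewrite -szS; clear -memS; move: memS; elim: S => //= x s IH /andP [/eqP -> /IH]; lia.
      lia.
    * by apply: sub_all (le_a F) => G /=; lia.
  + left. rewrite /tup_k /tup_e aG count_cat map_cat sumn_cat -/(tup_e F).
    rewrite -/(tup_e S) eS.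
    have -> : count (fun G => nedges G == tup_a F) S = 0.
      clear -memS ha; move: memS; elim: S => //= x s IH /andP [/eqP -> /IH ->]; case: eqP; lia.
    have := k_bound F (tup_a F).
    set k := count _ F; set a := tup_a F; set e := tup_e F => hk.
    case: (leqP k 3) => hk3; first lia.
    have : (k - 3) * (a - 1) >= 1 * 1 by apply: leq_mul; lia.
    nia.
- by rewrite /tup_e map_cat sumn_cat -/(tup_e F) -/(tup_e S) eS; lia.
- split; first by rewrite size_cat leq_addr.
  move=> i hi /=; rewrite nth_cat hi; split; [split|] => //.
Qed.
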